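(* Let $L_1,\dots,L_n$ be lines in $\mathbb{R}^3$ with $d(L_i,L_j)=1$ for all $1\le i<j\le n$, where $d(L,L')=\min_{x\in L,\,y\in L'}\|x-y\|$. If two of the lines $L_1,\dots,L_n$ are parallel, then $n\le 4$.
   Context: $\|\cdot\|$ is the Euclidean norm on $\mathbb{R}^3$. *)

(* Defs.v *)
From HB Require Import structures.
From mathcomp Require Import all_boot all_order all_algebra.
From mathcomp Require Import reals.
Set Implicit Arguments. Unset Strict Implicit. Unset Printing Implicit Defensive.
Import Order.TTheory GRing.Theory Num.Theory.
Local Open Scope ring_scope.

Definition enorm (R : realType) (x : 'rV[R]_3) : R :=
  Num.sqrt (\sum_(i < 3) x ord0 i ^+ 2).

Record line (R : realType) := Line {
  lpt : 'rV[R]_3;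
  ldir : 'rV[R]_3;
  ldir_neq0 : ldir != 0 }.

Definition on_line (R : realType) (L : line R) (x : 'rV[R]_3) : Prop :=
  exists t : R, x = lpt L + t *: ldir L.

Definition line_dist_is (R : realType) (L L' : line R) (r : R) : Prop :=
  (exists x y, on_line L x /\ on_line L' y /\ enorm (x - y) = r) /\
  (forall x y, on_line L x -> on_line L' y -> r <= enorm (x - y)).

Definition parallel (R : realType) (L L' : line R) : Prop :=
  exists c : R, ldir L' = c *: ldir L.

(* Main.v *)
Require Import Defs.
From HB Require Import structures.
From mathcomp Require Import all_boot all_order all_algebra.
From mathcomp Require Import reals.
From mathcomp Require Import ring lra.
From Stdlib Require Import Lia.
From mathcomp Require Import zify.
Import Order.TTheory GRing.Theory Num.Theory.
Local Open Scope ring_scope.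

Record v3 (R : realType) := V3 { c0 : R; c1 : R; c2 : R }.
Arguments V3 {R}.
Arguments c0 {R}.
Arguments c1 {R}.
Arguments c2 {R}.
Definition vadd {R : realType} (x y : v3 R) := V3 (c0 x + c0 y) (c1 x + c1 y) (c2 x + c2 y).
Definition vsub {R : realType} (x y : v3 R) := V3 (c0 x - c0 y) (c1 x - c1 y) (c2 x - c2 y).
Definition vscl {R : realType} (k : R) (x : v3 R) := V3 (k * c0 x) (k * c1 x) (k * c2 x).
Definition dot {R : realType} (x y : v3 R) := c0 x * c0 y + c1 x * c1 y + c2 x * c2 y.
Definition cross {R : realType} (x y : v3 R) :=
  V3 (c1 x * c2 y - c2 x * c1 y) (c2 x * c0 y - c0 x * c2 y) (c0 x * c1 y - c1 x * c0 y).
Definition nsq {R : realType} (x : v3 R) := dot x x.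
Definition det {R : realType} (x y z : v3 R) := dot x (cross y z).
Definition dist1 {R : realType} (w d e : v3 R) :=
  (forall s t : R, 1 <= nsq (vadd w (vsub (vscl s d) (vscl t e)))) /\
  exists s t : R, nsq (vadd w (vsub (vscl s d) (vscl t e))) = 1.

Lemma sq3_ge0 {R : realType} (a b c : R) : 0 <= a*a+b*b+c*c.
Proof. nra. Qed.

Lemma cs3 {R : realType} (y0 y1 y2 a b c : R) :
  (y0*a+y1*b+y2*c)^+2 <= (y0*y0+y1*y1+y2*y2)*(a*a+b*b+c*c).
Proof.
rewrite -subr_ge0.
have -> : (y0*y0+y1*y1+y2*y2) * (a*a+b*b+c*c) - (y0*a+y1*b+y2*c)^+2 =
     (y0*b-y1*a)^+2 + (y0*c-y2*a)^+2 + (y1*c-y2*b)^+2 by ring.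
by rewrite !addr_ge0 // sqr_ge0.
Qed.

Lemma distB {R : realType} {w d e : v3 R} :
  nsq (cross d e) != 0 -> dist1 w d e -> dot w (cross d e) ^+ 2 = nsq (cross d e).
Proof.
case: w => w0 w1 w2; case: d => d0 d1 d2; case: e => e0 e1 e2.
rewrite /dist1 /nsq /dot /cross /vadd /vsub /vscl /= => hN [lo [s [t hst]]].
set N := _ + _ + _ in hN *.
set W := (w0 * _ + _ + _).
set A := (w0*d0+w1*d1+w2*d2)*(e0*e0+e1*e1+e2*e2) - (w0*e0+w1*e1+w2*e2)*(d0*e0+d1*e1+d2*e2).
set B := (w0*e0+w1*e1+w2*e2)*(d0*d0+d1*d1+d2*d2) - (w0*d0+w1*d1+w2*d2)*(d0*e0+d1*e1+d2*e2).
have := lo (- A / N) (B / N).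
have -> : (w0 + (- A / N * d0 - B / N * e0)) = W / N * (d1 * e2 - d2 * e1).
  rewrite /W /A /B /N; field; exact hN.
have -> : (w1 + (- A / N * d1 - B / N * e1)) = W / N * (d2 * e0 - d0 * e2).
  rewrite /W /A /B /N; field; exact hN.
have -> : (w2 + (- A / N * d2 - B / N * e2)) = W / N * (d0 * e1 - d1 * e0).
  rewrite /W /A /B /N; field; exact hN.
have -> : W / N * (d1 * e2 - d2 * e1) * (W / N * (d1 * e2 - d2 * e1)) +
  W / N * (d2 * e0 - d0 * e2) * (W / N * (d2 * e0 - d0 * e2)) +
  W / N * (d0 * e1 - d1 * e0) * (W / N * (d0 * e1 - d1 * e0)) = W^+2 / N.
  rewrite /N; field; exact hN.
have Npos : 0 < N by rewrite lt0r hN /= /N sq3_ge0.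
rewrite ler_pdivlMr // mul1r => h1.
set y0 := w0 + (s*d0 - t*e0) in hst; set y1 := w1 + (s*d1 - t*e1) in hst; set y2 := w2 + (s*d2 - t*e2) in hst.
have hW : W = y0 * (d1 * e2 - d2 * e1) + y1 * (d2 * e0 - d0 * e2) + y2 * (d0 * e1 - d1 * e0).
  rewrite /W /y0 /y1 /y2; ring.
have CS := cs3 y0 y1 y2 (d1 * e2 - d2 * e1) (d2 * e0 - d0 * e2) (d0 * e1 - d1 * e0).
rewrite -hW hst mul1r in CS.
by apply/eqP; rewrite eq_le CS h1.
Qed.

Definition v0 {R : realType} : v3 R := V3 0 0 0.

Ltac dv := repeat match goal with x : v3 _ |- _ => destruct x end;
  rewrite /det /nsq /dot /cross /vadd /vsub /vscl /=.

Lemma I1 {R : realType} (x y : v3 R) : nsq x * nsq y = dot x y ^+ 2 + nsq (cross x y).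
Proof. dv; ring. Qed.
Lemma I2 {R : realType} (u w v : v3 R) : dot u (cross w v) = - dot w (cross u v).
Proof. dv; ring. Qed.
Lemma I3 {R : realType} (w v : v3 R) : dot v (cross w v) = 0.
Proof. dv; ring. Qed.
Lemma I3' {R : realType} (w v : v3 R) : dot w (cross w v) = 0.
Proof. dv; ring. Qed.
Lemma I4 {R : realType} (u w v : v3 R) : nsq (cross u v) * nsq (cross w v) =
  dot (cross u v) (cross w v) ^+ 2 + dot w (cross u v) ^+ 2 * nsq v.
Proof. dv; ring. Qed.
Lemma I5 {R : realType} (x u w v : v3 R) :
  nsq (cross w v) * dot x (cross u v) - dot (cross u v) (cross w v) * dot x (cross w v)
  = dot u (cross w v) * dot x (cross (cross w v) v).
Proof. dv; ring. Qed.
Lemma I6 {R : realType} (u w v : v3 R) :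
  nsq (cross w v) * nsq (cross u v) - dot (cross u v) (cross w v) ^+ 2
  = dot u (cross w v) ^+ 2 * nsq v.
Proof. dv; ring. Qed.
Lemma I7 {R : realType} (x a b : v3 R) :
  nsq (cross a b) * nsq x - dot x (cross a b) ^+ 2 =
  dot x b ^+ 2 * nsq a - 2 * dot x a * dot x b * dot a b + dot x a ^+ 2 * nsq b.
Proof. dv; ring. Qed.
Lemma I8 {R : realType} (x y a b : v3 R) :
  nsq (cross a b) * dot x y - dot x (cross a b) * dot y (cross a b) =
  dot x b * dot y b * nsq a - dot x b * dot y a * dot a b - dot x a * dot y b * dot a b
  + dot x a * dot y a * nsq b.
Proof. dv; ring. Qed.
Lemma I9 {R : realType} (x y z g : v3 R) :
  det x y z * nsq g = dot x g * det g y z + dot y g * det g z x + dot z g * det g x y.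
Proof. dv; ring. Qed.
Lemma I10 {R : realType} (p q s : v3 R) :
  det p q s ^+ 2 = nsq p * nsq q * nsq s + 2 * dot p q * dot q s * dot p s
   - nsq p * dot q s ^+ 2 - nsq q * dot p s ^+ 2 - nsq s * dot p q ^+ 2.
Proof. dv; ring. Qed.
Lemma I11 {R : realType} (x y z d : v3 R) :
  det (cross x d) (cross y d) (cross z d) = 0.
Proof. dv; ring. Qed.
Lemma I13 {R : realType} (x y d : v3 R) :
  nsq (cross x d) * nsq (cross y d) - dot (cross x d) (cross y d) ^+ 2 = det x y d ^+ 2 * nsq d.
Proof. dv; ring. Qed.
Lemma nsq_sub {R : realType} (x y : v3 R) : nsq (vsub x y) = nsq x + nsq y - 2 * dot x y.
Proof. dv; ring. Qed.
Lemma cross_subl {R : realType} (x y d : v3 R) : cross (vsub x y) d = vsub (cross x d) (cross y d).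
Proof. dv; congr V3; ring. Qed.
Lemma vsub_sub {R : realType} (a b c : v3 R) : vsub (vsub b a) (vsub c a) = vsub b c.
Proof. dv; congr V3; ring. Qed.
Lemma dot_subl3 {R : realType} (a p1 p2 n : v3 R) :
  dot (vsub a p2) n = dot (vsub a p1) n + dot (vsub p1 p2) n.
Proof. dv; ring. Qed.
Lemma cross_sclr {R : realType} (k : R) (x y : v3 R) : cross x (vscl k y) = vscl k (cross x y).
Proof. dv; congr V3; ring. Qed.
Lemma cross_scll {R : realType} (k : R) (x y : v3 R) : cross (vscl k x) y = vscl k (cross x y).
Proof. dv; congr V3; ring. Qed.
Lemma dot_sclr {R : realType} (k : R) (x y : v3 R) : dot x (vscl k y) = k * dot x y.
Proof. dv; ring. Qed.
Lemma dot_scll {R : realType} (k : R) (x y : v3 R) : dot (vscl k x) y = k * dot x y.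
Proof. dv; ring. Qed.
Lemma nsq_scl {R : realType} (k : R) (x : v3 R) : nsq (vscl k x) = k ^+ 2 * nsq x.
Proof. dv; ring. Qed.
Lemma nsq_ge0 {R : realType} (x : v3 R) : 0 <= nsq x.
Proof. dv; exact: sq3_ge0. Qed.
Lemma dot_neg {R : realType} (x y : v3 R) : dot (vsub y x) (cross (vsub x y) (cross x y)) = dot (vsub y x) (cross (vsub x y) (cross x y)).
Proof. by []. Qed.

Lemma nsq_gt0 {R : realType} {x : v3 R} : nsq x != 0 -> 0 < nsq x.
Proof. by move=> h; rewrite lt0r h nsq_ge0. Qed.

Lemma distA {R : realType} (w v : v3 R) (l m : R) : nsq v != 0 -> l != 0 ->
  dist1 w (vscl l v) (vscl m v) -> nsq (cross w v) = nsq v.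
Proof.
move=> hV hl [lo [s [t hst]]].
have Vpos := nsq_gt0 hV.
have h1 := lo (- dot w v / (nsq v * l)) 0.
have E : nsq (vadd w (vsub (vscl (- dot w v / (nsq v * l)) (vscl l v)) (vscl 0 (vscl m v))))
   = nsq (cross w v) / nsq v.
  move: hV hl; dv => hV hl; field; by rewrite hV hl.
rewrite E ler_pdivlMr // mul1r in h1.
have Ey : vadd w (vsub (vscl s (vscl l v)) (vscl t (vscl m v))) = vadd w (vscl (s * l - t * m) v).
  by dv; congr V3; ring.
rewrite Ey in hst.
have Ec : cross (vadd w (vscl (s * l - t * m) v)) v = cross w v by dv; congr V3; ring.
have := I1 (vadd w (vscl (s * l - t * m) v)) v.
rewrite hst Ec mul1r => h2.
apply/eqP; rewrite eq_le h1 andbT h2 lerDr; exact: sqr_ge0.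
Qed.

Lemma mainL {R : realType} (p1 p2 a u v : v3 R) (mu : R) :
  nsq v != 0 -> mu != 0 -> nsq (cross (vsub p1 p2) v) = nsq v ->
  dist1 (vsub a p1) u v -> dist1 (vsub a p2) u (vscl mu v) -> nsq (cross u v) != 0 ->
  dot u (cross (vsub p1 p2) v) = 0 /\ dot (vsub a p1) (cross (vsub p1 p2) v) ^+ 2 = nsq v.
Proof.
move=> hV hmu hg d1 d2 hn.
have Vpos := nsq_gt0 hV; have Npos := nsq_gt0 hn.
have X2 := distB hn d1.
have hn2 : nsq (cross u (vscl mu v)) != 0 by rewrite cross_sclr nsq_scl mulf_neq0 // expf_neq0.
have Y2 := distB hn2 d2.
rewrite cross_sclr dot_sclr nsq_scl exprMn in Y2.
have {Y2} Y2 : dot (vsub a p2) (cross u v) ^+ 2 = nsq (cross u v).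
  by apply: (mulfI (expf_neq0 2 hmu)).
rewrite (dot_subl3 a p1 p2) in Y2.
have h4 := I4 u (vsub p1 p2) v.
rewrite hg in h4.
set X := dot (vsub a p1) (cross u v) in X2 Y2 *.
set W := dot (vsub p1 p2) (cross u v) in Y2 h4 *.
set N := nsq (cross u v) in X2 Y2 h4 Npos *.
set V := nsq v in hg h4 Vpos *.
have WN : W ^+ 2 <= N.
  have : W ^+ 2 * V <= N * V.
    rewrite h4 lerDr; exact: sqr_ge0.
  by rewrite ler_pM2r.
have W0 : W = 0.
  have : W * (2 * X + W) = 0.
    have -> : W * (2 * X + W) = (X + W) ^+ 2 - X ^+ 2 by ring.
    by rewrite Y2 X2 subrr.
  move/eqP; rewrite mulf_eq0 => /orP[/eqP //|/eqP h].
  have hW : W = - (2 * X) by lra.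
  exfalso; move: WN; rewrite hW sqrrN exprMn -X2; nra.
have ug : dot u (cross (vsub p1 p2) v) = 0 by rewrite I2 -/W W0 oppr0.
split => //.
have h5 := I5 (vsub a p1) u (vsub p1 p2) v.
have h6 := I6 u (vsub p1 p2) v.
rewrite ug mul0r in h5; rewrite ug expr0n /= mul0r in h6.
rewrite hg -/X -/N in h5 h6.
set c := dot (cross u v) (cross (vsub p1 p2) v) in h5 h6.
set Z := dot (vsub a p1) (cross (vsub p1 p2) v) in h5 *.
have e1 : V * X = c * Z by apply/eqP; rewrite -subr_eq0 h5.
have e2 : V * N = c ^+ 2 by apply/eqP; rewrite -subr_eq0 h6.
have c2 : c ^+ 2 != 0 by rewrite -e2 mulf_neq0 // lt0r_neq0.
have : c ^+ 2 * Z ^+ 2 = c ^+ 2 * V.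
  rewrite -exprMn -e1 exprMn X2 -e2; ring.
by move/(mulfI c2).
Qed.

Lemma I14 {R : realType} (z a b : v3 R) :
  nsq b * dot z a - dot a b * dot z b = dot z (cross b (cross a b)).
Proof. dv; ring. Qed.
Lemma I15 {R : realType} (a b c d : v3 R) :
  det (vsub b a) (vsub c a) d = dot (vsub c a) (cross (vsub a b) d).
Proof. dv; ring. Qed.
Lemma I16 {R : realType} (a b c g : v3 R) :
  dot (vsub a b) g = dot (vsub a c) g - dot (vsub b c) g.
Proof. dv; ring. Qed.
Lemma I17 {R : realType} (w d e g : v3 R) (s t : R) :
  dot (vadd w (vsub (vscl s d) (vscl t e))) g = dot w g + s * dot d g - t * dot e g.
Proof. dv; ring. Qed.
Lemma I18 {R : realType} (x y v : v3 R) : dot (vsub x y) (cross (vsub y x) v) = 0.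
Proof. dv; ring. Qed.
Lemma cross_v0 {R : realType} (z b : v3 R) : dot z (cross b v0) = 0.
Proof. dv; ring. Qed.
Lemma vscl1 {R : realType} (v : v3 R) : v = vscl 1 v.
Proof. dv; congr V3; ring. Qed.

Lemma nsq0 {R : realType} (z : v3 R) : nsq z = 0 -> z = v0.
Proof.
case: z => a b c; rewrite /nsq /dot /v0 /= => h.
have : a * a == 0 by apply/eqP; nra.
rewrite mulf_eq0 orbb => /eqP ->.
have : b * b == 0 by apply/eqP; nra.
rewrite mulf_eq0 orbb => /eqP ->.
have : c * c == 0 by apply/eqP; nra.
by rewrite mulf_eq0 orbb => /eqP ->.
Qed.

Lemma scl_neq0 {R : realType} (k : R) (v : v3 R) : nsq (vscl k v) != 0 -> k != 0.
Proof. by rewrite nsq_scl; apply: contraNneq => ->; rewrite expr0n /= mul0r. Qed.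

Lemma par_of_cross0 {R : realType} {u v : v3 R} : nsq (cross u v) = 0 -> nsq v != 0 ->
  u = vscl (dot u v / nsq v) v.
Proof.
move=> h hV.
have h1 := I1 u v; rewrite h addr0 in h1.
have : nsq (vsub u (vscl (dot u v / nsq v) v)) = 0.
  rewrite nsq_sub nsq_scl dot_sclr.
  apply: (mulfI hV); rewrite mulr0.
  have -> : nsq v * (nsq u + (dot u v / nsq v) ^+ 2 * nsq v - 2 * (dot u v / nsq v * dot u v))
    = nsq u * nsq v - dot u v ^+ 2.
    by field.
  by rewrite h1 subrr.
move/nsq0; move: (dot u v / nsq v) => k; clear h h1 hV.
case: u => ??? ; case: v => ???; rewrite /vsub /vscl /v0 /= => -[] *.
congr V3; lra.
Qed.

Lemma detcop {R : realType} {x y z g : v3 R} : nsq g != 0 ->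
  dot x g = 0 -> dot y g = 0 -> dot z g = 0 -> det x y z = 0.
Proof.
move=> hg hx hy hz; have := I9 x y z g.
rewrite hx hy hz !mul0r !addr0 => /eqP; rewrite mulf_eq0 (negbTE hg) orbF.
by move/eqP.
Qed.

Lemma perp2 {R : realType} (x y a b : v3 R) : nsq (cross a b) != 0 ->
  dot x a = 0 -> dot x b = 0 -> dot y a = 0 -> dot y b = 0 -> nsq (cross x y) = 0.
Proof.
move=> hm xa xb ya yb.
have h7x := I7 x a b; have h7y := I7 y a b; have h8 := I8 x y a b; have h1 := I1 x y.
rewrite xa xb ?expr0n /= ?mul0r ?mulr0 ?subr0 ?addr0 in h7x h8.
rewrite ya yb ?expr0n /= ?mul0r ?mulr0 ?subr0 ?addr0 in h7y h8.
rewrite ?mul0r ?mulr0 ?subr0 ?addr0 in h7x h7y h8.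
set M := nsq (cross a b) in hm h7x h7y h8.
have e1 : M * nsq x = dot x (cross a b) ^+ 2 by apply/eqP; rewrite -subr_eq0 h7x.
have e2 : M * nsq y = dot y (cross a b) ^+ 2 by apply/eqP; rewrite -subr_eq0 h7y.
have e3 : M * dot x y = dot x (cross a b) * dot y (cross a b) by apply/eqP; rewrite -subr_eq0 h8.
have hM2 : M ^+ 2 != 0 by rewrite expf_neq0.
apply: (mulfI hM2); rewrite mulr0.
have -> : nsq (cross x y) = nsq x * nsq y - dot x y ^+ 2 by rewrite h1; ring.
have -> : M ^+ 2 * (nsq x * nsq y - dot x y ^+ 2) = (M * nsq x) * (M * nsq y) - (M * dot x y) ^+ 2 by ring.
rewrite e1 e2 e3; ring.
Qed.

Lemma par3 {R : realType} (a b c d : v3 R) : nsq d != 0 ->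
  nsq (cross (vsub b a) d) = nsq d -> nsq (cross (vsub c a) d) = nsq d ->
  nsq (cross (vsub b c) d) = nsq d -> det (vsub b a) (vsub c a) d = 0 -> False.
Proof.
move=> hd h1 h2 h3 h0.
have := I13 (vsub b a) (vsub c a) d.
rewrite -(vsub_sub a b c) cross_subl nsq_sub in h3.
rewrite h0 expr0n /= mul0r h1 h2.
rewrite h1 h2 in h3.
have Vpos := nsq_gt0 hd.
move: (dot _ _) h3 => p h3 h.
nra.
Qed.

Lemma par4 {R : realType} (a b c e d : v3 R) : nsq d != 0 ->
  nsq (cross (vsub b a) d) = nsq d -> nsq (cross (vsub c a) d) = nsq d ->
  nsq (cross (vsub e a) d) = nsq d ->
  nsq (cross (vsub b c) d) = nsq d -> nsq (cross (vsub b e) d) = nsq d ->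
  nsq (cross (vsub c e) d) = nsq d -> False.
Proof.
move=> hd h1 h2 h3 h4 h5 h6.
rewrite -(vsub_sub a b c) cross_subl nsq_sub h1 h2 in h4.
rewrite -(vsub_sub a b e) cross_subl nsq_sub h1 h3 in h5.
rewrite -(vsub_sub a c e) cross_subl nsq_sub h2 h3 in h6.
have := I10 (cross (vsub b a) d) (cross (vsub c a) d) (cross (vsub e a) d).
rewrite I11 h1 h2 h3.
have Vpos := nsq_gt0 hd.
move: (dot (cross (vsub b a) d) _) h4 => p h4.
move: (dot (cross (vsub b a) d) _) h5 => q h5.
move: (dot (cross (vsub c a) d) _) h6 => r h6.
move: (nsq d) Vpos h4 h5 h6 => V Vpos h4 h5 h6.
have -> : p = V / 2 by lra.
have -> : q = V / 2 by lra.
have -> : r = V / 2 by lra.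
move=> h.
have V3 : 0 < V ^+ 3 by rewrite exprn_gt0.
rewrite expr0n /= in h.
nra.
Qed.

Lemma distLow {R : realType} {w d e g : v3 R} : dist1 w d e -> dot d g = 0 -> dot e g = 0 ->
  dot w g ^+ 2 <= nsq g.
Proof.
move=> [_ [s [t h]]] hd he.
have := I1 (vadd w (vsub (vscl s d) (vscl t e))) g.
rewrite h mul1r I17 hd he !mulr0 subr0 addr0 => ->.
by rewrite lerDl nsq_ge0.
Qed.


Definition hdT {R : realType} {I : eqType} (P D : I -> v3 R) :=
  forall k l, k != l -> dist1 (vsub (P k) (P l)) (D k) (D l).

Lemma distA_idx {R : realType} {I : eqType} {P D : I -> v3 R} (hd : hdT P D) (v : v3 R)
  k l (lk ll : R) : k != l -> nsq v != 0 -> lk != 0 -> D k = vscl lk v -> D l = vscl ll v ->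
  nsq (cross (vsub (P k) (P l)) v) = nsq v.
Proof. move=> kl hv hl ek el; apply: (distA _ _ lk ll hv hl); rewrite -ek -el; exact: hd. Qed.

Lemma four_par {R : realType} {I : eqType} {P D : I -> v3 R} (hd : hdT P D) (v : v3 R)
  a b c e (la lb lc le : R) : nsq v != 0 ->
  a != b -> a != c -> a != e -> b != c -> b != e -> c != e ->
  la != 0 -> lb != 0 -> lc != 0 -> le != 0 ->
  D a = vscl la v -> D b = vscl lb v -> D c = vscl lc v -> D e = vscl le v -> False.
Proof.
move=> hv ab ac ae bc be ce hla hlb hlc hle Da Db Dc De.
apply: (par4 (P a) (P b) (P c) (P e) v hv).
- by apply: (distA_idx hd v b a lb la _ hv hlb Db Da); rewrite eq_sym.
- by apply: (distA_idx hd v c a lc la _ hv hlc Dc Da); rewrite eq_sym.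
- by apply: (distA_idx hd v e a le la _ hv hle De Da); rewrite eq_sym.
- by apply: (distA_idx hd v b c lb lc _ hv hlb Db Dc).
- by apply: (distA_idx hd v b e lb le _ hv hlb Db De).
- by apply: (distA_idx hd v c e lc le _ hv hlc Dc De).
Qed.

Lemma three_par {R : realType} {I : eqType} {P D : I -> v3 R} (hd : hdT P D) (v : v3 R)
  a b c (la lb lc : R) : nsq v != 0 ->
  a != b -> a != c -> b != c ->
  la != 0 -> lb != 0 -> lc != 0 ->
  D a = vscl la v -> D b = vscl lb v -> D c = vscl lc v ->
  det (vsub (P b) (P a)) (vsub (P c) (P a)) v = 0 -> False.
Proof.
move=> hv ab ac bc hla hlb hlc Da Db Dc h0.
apply: (par3 (P a) (P b) (P c) v hv) => //.
- by apply: (distA_idx hd v b a lb la _ hv hlb Db Da); rewrite eq_sym.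
- by apply: (distA_idx hd v c a lc la _ hv hlc Dc Da); rewrite eq_sym.
- by apply: (distA_idx hd v b c lb lc _ hv hlb Db Dc).
Qed.

Lemma caseOne {R : realType} {I : eqType} {P D : I -> v3 R} (hd : hdT P D)
  i j k1 k2 (mu l : R) : nsq (D i) != 0 ->
  i != j -> i != k1 -> i != k2 -> j != k1 -> j != k2 -> k1 != k2 ->
  mu != 0 -> l != 0 -> D j = vscl mu (D i) -> D k1 = vscl l (D i) ->
  nsq (cross (D k2) (D i)) != 0 -> False.
Proof.
move=> hV ij ik1 ik2 jk1 jk2 k12 hmu hl Dj Dk1 hn.
set v := D i in hV Dj Dk1 hn.
have Di : D i = vscl 1 v by rewrite -vscl1.
have h1 : (1 : R) != 0 by rewrite oner_eq0.
have hij := distA_idx hd v i j 1 mu ij hV h1 Di Dj.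
have hik := distA_idx hd v i k1 1 l ik1 hV h1 Di Dk1.
have d2i : dist1 (vsub (P k2) (P i)) (D k2) v by apply: hd; rewrite eq_sym.
have d2j : dist1 (vsub (P k2) (P j)) (D k2) (vscl mu v) by rewrite -Dj; apply: hd; rewrite eq_sym.
have d21 : dist1 (vsub (P k2) (P k1)) (D k2) (vscl l v) by rewrite -Dk1; apply: hd; rewrite eq_sym.
have [ug _] := mainL _ _ _ _ _ _ hV hmu hij d2i d2j hn.
have [ug' _] := mainL _ _ _ _ _ _ hV hl hik d2i d21 hn.
set g := cross (vsub (P i) (P j)) v in ug.
set g' := cross (vsub (P i) (P k1)) v in ug'.
case: (eqVneq (nsq (cross g g')) 0) => [h0|hne].
  move/nsq0: h0 => h0.
  have := I14 (vsub (P k1) (P i)) g g'.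
  rewrite h0 cross_v0 I18 mulr0 subr0 hik => /eqP; rewrite mulf_eq0 (negbTE hV) /= => /eqP hz.
  apply: (three_par hd v i j k1 1 mu l hV ij ik1 jk1 h1 hmu hl Di Dj Dk1).
  by rewrite I15.
move: hn; rewrite (perp2 (D k2) v g g' hne ug ug') ?eqxx //; exact: I3.
Qed.

Lemma nsq_cross_anti {R : realType} (x y : v3 R) : nsq (cross x y) = nsq (cross y x).
Proof. dv; ring. Qed.
Lemma I19 {R : realType} (a b g : v3 R) : dot (vsub a b) g = - dot (vsub b a) g.
Proof. dv; ring. Qed.

Lemma sq_eq {R : realType} (x y V : R) : 0 < V -> x ^+ 2 = V -> y ^+ 2 = V ->
  (x - y) ^+ 2 <= V -> x - y = 0.
Proof.
move=> Vp hx hy h.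
have : (x - y) * (x + y) = 0 by rewrite -[RHS](subrr V) -{1}hx -hy; ring.
move/eqP; rewrite mulf_eq0 => /orP[/eqP //|/eqP e].
have ey : y = - x by lra.
exfalso; move: h; rewrite ey; nra.
Qed.

Lemma caseNone {R : realType} {I : eqType} {P D : I -> v3 R} (hd : hdT P D)
  i j k1 k2 k3 (mu : R) : nsq (D i) != 0 -> (forall k, nsq (D k) != 0) ->
  i != j -> i != k1 -> i != k2 -> i != k3 -> j != k1 -> j != k2 -> j != k3 ->
  k1 != k2 -> k1 != k3 -> k2 != k3 ->
  mu != 0 -> D j = vscl mu (D i) ->
  nsq (cross (D k1) (D i)) != 0 -> nsq (cross (D k2) (D i)) != 0 ->
  nsq (cross (D k3) (D i)) != 0 -> False.
Proof.
move=> hV hD ij ik1 ik2 ik3 jk1 jk2 jk3 k12 k13 k23 hmu Dj hn1 hn2 hn3.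
set v := D i in hV Dj hn1 hn2 hn3.
have Di : D i = vscl 1 v by rewrite -vscl1.
have h1 : (1 : R) != 0 by rewrite oner_eq0.
have hij := distA_idx hd v i j 1 mu ij hV h1 Di Dj.
have Vpos := nsq_gt0 hV.
set g := cross (vsub (P i) (P j)) v.
have gV : nsq g != 0 by rewrite /g hij.
have M k : i != k -> j != k -> nsq (cross (D k) v) != 0 ->
    dot (D k) g = 0 /\ dot (vsub (P k) (P i)) g ^+ 2 = nsq v.
  move=> ik jk hn; apply: (mainL _ _ _ _ _ _ hV hmu hij) => //.
    by apply: hd; rewrite eq_sym.
  by rewrite -Dj; apply: hd; rewrite eq_sym.
have [u1g H1] := M k1 ik1 jk1 hn1.
have [u2g H2] := M k2 ik2 jk2 hn2.
have [u3g H3] := M k3 ik3 jk3 hn3.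
have E k l : k != l -> dot (D k) g = 0 -> dot (D l) g = 0 ->
    dot (vsub (P k) (P i)) g ^+ 2 = nsq v -> dot (vsub (P l) (P i)) g ^+ 2 = nsq v ->
    dot (vsub (P k) (P l)) g = 0.
  move=> kl hk hl Hk Hl.
  have := distLow (hd k l kl) hk hl.
  rewrite (I16 (P k) (P l) (P i) g) /g hij -/g => h.
  exact: (sq_eq _ _ _ Vpos Hk Hl h).
have e12 := E k1 k2 k12 u1g u2g H1 H2.
have e13 := E k1 k3 k13 u1g u3g H1 H3.
have e23 := E k2 k3 k23 u2g u3g H2 H3.
set u1 := D k1 in u1g e12 e13 hn1 *.
have hu1 : nsq u1 != 0 by apply: hD.
have c12 : nsq (cross (D k2) u1) = 0.
  rewrite nsq_cross_anti.
  case: (eqVneq (nsq (cross u1 (D k2))) 0) => // hne; exfalso.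
  have := distB hne (hd k1 k2 k12).
  rewrite -/(det _ _ _) (detcop gV e12 u1g u2g) expr0n /= => /esym/eqP.
  by rewrite (negbTE hne).
have Dk2 := par_of_cross0 c12 hu1.
set nu := dot (D k2) u1 / nsq u1 in Dk2.
have hnu : nu != 0 by apply: (scl_neq0 _ u1); rewrite -Dk2; apply: hD.
have Du1 : D k1 = vscl 1 u1 by rewrite -vscl1.
have h12 := distA_idx hd u1 k1 k2 1 nu k12 hu1 h1 Du1 Dk2.
have e21 : dot (vsub (P k2) (P k1)) g = 0 by rewrite I19 e12 oppr0.
have e31 : dot (vsub (P k3) (P k1)) g = 0 by rewrite I19 e13 oppr0.
case: (eqVneq (nsq (cross (D k3) u1)) 0) => [c3|hn3'].
  have Dk3 := par_of_cross0 c3 hu1.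
  set nu3 := dot (D k3) u1 / nsq u1 in Dk3.
  have hnu3 : nu3 != 0 by apply: (scl_neq0 _ u1); rewrite -Dk3; apply: hD.
  apply: (three_par hd u1 k1 k2 k3 1 nu nu3 hu1 k12 k13 k23 h1 hnu hnu3 Du1 Dk2 Dk3).
  apply: (detcop gV) => //.
have d31 : dist1 (vsub (P k3) (P k1)) (D k3) u1 by apply: hd; rewrite eq_sym.
have d32 : dist1 (vsub (P k3) (P k2)) (D k3) (vscl nu u1) by rewrite -Dk2; apply: hd; rewrite eq_sym.
have [_ H] := mainL _ _ _ _ _ _ hu1 hnu h12 d31 d32 hn3'.
move: H; rewrite -/(det _ _ _) (detcop gV e31 e12 u1g) expr0n /= => /esym/eqP.
by rewrite (negbTE hu1).
Qed.

Definition tov {R : realType} (x : 'rV[R]_3) : v3 R :=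
  V3 (x ord0 (inord 0)) (x ord0 (inord 1)) (x ord0 (inord 2)).

Lemma sum3 {R : realType} (f : 'I_3 -> R) :
  \sum_(i < 3) f i = f (inord 0) + f (inord 1) + f (inord 2).
Proof.
rewrite !big_ord_recr big_ord0 /= add0r.
by congr (f _ + f _ + f _); apply: val_inj; rewrite /= inordK.
Qed.

Lemma enormE {R : realType} (x : 'rV[R]_3) : enorm x = Num.sqrt (nsq (tov x)).
Proof. by rewrite /enorm sum3 /nsq /dot /tov /= !expr2. Qed.

Lemma tov_comb {R : realType} (p q d e : 'rV[R]_3) (s t : R) :
  tov (p + s *: d - (q + t *: e)) = vadd (vsub (tov p) (tov q)) (vsub (vscl s (tov d)) (vscl t (tov e))).
Proof. rewrite /tov /vadd /vsub /vscl /=; congr V3; rewrite !mxE; ring. Qed.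

Lemma conv_dist {R : realType} (L L' : line R) : line_dist_is L L' 1 ->
  dist1 (vsub (tov (lpt L)) (tov (lpt L'))) (tov (ldir L)) (tov (ldir L')).
Proof.
move=> [[x [y [[s ->] [[t ->] hxy]]]] lo]; split.
  move=> s' t'.
  have := lo _ _ (ex_intro _ s' erefl) (ex_intro _ t' erefl).
  by rewrite enormE tov_comb -{1}sqrtr1 ler_sqrt // nsq_ge0.
exists s, t; move: hxy; rewrite enormE tov_comb -sqrtr1 => /eqP.
rewrite eqr_sqrt ?nsq_ge0 ?ler01 // sqrtr1; exact/eqP.
Qed.

Lemma conv_neq0 {R : realType} (L : line R) : nsq (tov (ldir L)) != 0.
Proof.
apply: contra (ldir_neq0 L) => /eqP/nsq0; rewrite /tov /v0 => -[h0 h1 h2].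
apply/eqP/matrixP => a b; rewrite (ord1 a) mxE.
case: b => [[|[|[|b]]]] hb //.
- by rewrite -h0; congr (_ _ _); apply: val_inj; rewrite /= inordK.
- by rewrite -h1; congr (_ _ _); apply: val_inj; rewrite /= inordK.
- by rewrite -h2; congr (_ _ _); apply: val_inj; rewrite /= inordK.
Qed.

Lemma conv_par {R : realType} (L L' : line R) (c : R) : ldir L' = c *: ldir L ->
  tov (ldir L') = vscl c (tov (ldir L)).
Proof. by move=> ->; rewrite /tov /vscl /=; congr V3; rewrite mxE. Qed.

Lemma classify {R : realType} {I : eqType} {D : I -> v3 R} (hD : forall k, nsq (D k) != 0) i k :
  (exists2 l, l != 0 & D k = vscl l (D i)) \/ nsq (cross (D k) (D i)) != 0.
Proof.
case: (eqVneq (nsq (cross (D k) (D i))) 0) => [c|h]; last by right.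
left; have Dk := par_of_cross0 c (hD i).
exists (dot (D k) (D i) / nsq (D i)) => //.
by apply: (scl_neq0 _ (D i)); rewrite -Dk; apply: hD.
Qed.

Lemma core {R : realType} {I : eqType} {P D : I -> v3 R} (hd : hdT P D)
  (hD : forall k, nsq (D k) != 0) i j k1 k2 k3 (mu : R) :
  i != j -> i != k1 -> i != k2 -> i != k3 -> j != k1 -> j != k2 -> j != k3 ->
  k1 != k2 -> k1 != k3 -> k2 != k3 -> D j = vscl mu (D i) -> False.
Proof.
move=> ij ik1 ik2 ik3 jk1 jk2 jk3 k12 k13 k23 Dj.
have hmu : mu != 0 by apply: (scl_neq0 _ (D i)); rewrite -Dj; apply: hD.
have hV := hD i.
have Di : D i = vscl 1 (D i) by rewrite -vscl1.
have h1 : (1 : R) != 0 by rewrite oner_eq0.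
have s (a b : I) : a != b -> b != a by rewrite eq_sym.
case: (classify hD i k1) => [[l1 hl1 D1]|n1];
case: (classify hD i k2) => [[l2 hl2 D2]|n2];
case: (classify hD i k3) => [[l3 hl3 D3]|n3].
- exact: (four_par hd (D i) i j k1 k2 1 mu l1 l2 hV ij ik1 ik2 jk1 jk2 k12 h1 hmu hl1 hl2 Di Dj D1 D2).
- exact: (four_par hd (D i) i j k1 k2 1 mu l1 l2 hV ij ik1 ik2 jk1 jk2 k12 h1 hmu hl1 hl2 Di Dj D1 D2).
- exact: (four_par hd (D i) i j k1 k3 1 mu l1 l3 hV ij ik1 ik3 jk1 jk3 k13 h1 hmu hl1 hl3 Di Dj D1 D3).
- exact: (caseOne hd i j k1 k2 mu l1 hV ij ik1 ik2 jk1 jk2 k12 hmu hl1 Dj D1 n2).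
- exact: (four_par hd (D i) i j k2 k3 1 mu l2 l3 hV ij ik2 ik3 jk2 jk3 k23 h1 hmu hl2 hl3 Di Dj D2 D3).
- exact: (caseOne hd i j k2 k1 mu l2 hV ij ik2 ik1 jk2 jk1 (s _ _ k12) hmu hl2 Dj D2 n1).
- exact: (caseOne hd i j k3 k1 mu l3 hV ij ik3 ik1 jk3 jk1 (s _ _ k13) hmu hl3 Dj D3 n1).
- exact: (caseNone hd i j k1 k2 k3 mu hV hD ij ik1 ik2 ik3 jk1 jk2 jk3 k12 k13 k23 hmu Dj n1 n2 n3).
Qed.

Theorem mainTheorem4 (R : realType) (n : nat) (L : 'I_n -> line R)
  (hdist : forall i j : 'I_n, i != j -> line_dist_is (L i) (L j) 1)
  (hpar : exists i j : 'I_n, i != j /\ parallel (L i) (L j)) :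
  (n <= 4)%N.
Proof.
have [i [j [ij [c hc]]]] := hpar.
rewrite leqNgt; apply/negP => hn.
pose P k := tov (lpt (L k)); pose D k := tov (ldir (L k)).
have hd : hdT P D by move=> k l kl; apply: conv_dist; apply: hdist.
have hD : forall k, nsq (D k) != 0 by move=> k; apply: conv_neq0.
have Dj : D j = vscl c (D i) by apply: conv_par.
pose A := [set k | (k != i) && (k != j)].
have cA : #|A| = (n - 2)%N.
  have -> : A = ~: [set i; j].
    by apply/setP => k; rewrite !inE negb_or.
  by rewrite cardsCs setCK cards2 ij card_ord.
have sz : (3 <= size (enum A))%N by rewrite -cardE cA; lia.
have uA := enum_uniq (mem A).
pose k m := nth i (enum A) m.
have kA m : (m < size (enum A))%N -> k m \in A by move=> hm; rewrite -mem_enum mem_nth.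
have kd m m' : (m < size (enum A))%N -> (m' < size (enum A))%N -> m != m' -> k m != k m'.
  by move=> hm hm' mm; rewrite /k nth_uniq.
have s0 : (0 < size (enum A))%N by lia.
have s1 : (1 < size (enum A))%N by lia.
have k0 := kA 0%N s0; have k1 := kA 1%N s1;
have k2 := kA 2%N sz.
rewrite !inE in k0 k1 k2.
move/andP: k0 => [i0 j0]; move/andP: k1 => [i1 j1]; move/andP: k2 => [i2 j2].
apply: (core hd hD i j (k 0%N) (k 1%N) (k 2%N) c ij) => //; try by rewrite eq_sym.
- exact: kd s0 s1 isT.
- exact: kd s0 sz isT.
- exact: kd s1 sz isT.
Qed.
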